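(* Let $G$ be a graph. (i) If some connected component of $G$ has a degree sequence of cardinality $r>2$, then $K(H(G,x))\ge 2$. (ii) For each integer $r\ge 1$ there exists a graph $G$ whose degree sequence has cardinality $r$ and with $K(H(G,x))=1$.
   Context: All graphs are finite, simple and have no isolated vertices; $d_u$ is the degree of $u$. The harmonic polynomial is $H(G,x)=\sum_{uv\in E(G)}x^{d_u+d_v-1}$. For a polynomial $p$, $K(p(x))$ is the number of its non-zero coefficients. The degree sequence of a graph is the set of distinct vertex degree values, and its cardinality is the number of distinct vertex degrees. *)

(* Defs.v *)
From mathcomp Require Import all_boot all_order all_algebra.
Set Implicit Arguments. Unset Strict Implicit. Unset Printing Implicit Defensive.
Import GRing.Theory.
Local Open Scope ring_scope.

Definition is_graph (T : finType) (e : rel T) : Prop :=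
  symmetric e /\ irreflexive e /\ (forall u : T, exists v : T, e u v).

Definition deg (T : finType) (e : rel T) (u : T) : nat := #|[set v | e u v]|.

Definition edges (T : finType) (e : rel T) : {set {set T}} :=
  [set E : {set T} | [exists u, exists v, e u v && (E == [set u; v])]].

Definition harmonic_poly (T : finType) (e : rel T) : {poly int} :=
  \sum_(E in edges e) 'X^((\sum_(w in E) deg e w) - 1)%N.

Definition Kcoef (p : {poly int}) : nat := count (fun c : int => c != 0) p.

(* the degree sequence (set of distinct degree values) of the connected
   component of G containing x; degrees in the component equal those in G *)
Definition comp_degree_set (T : finType) (e : rel T) (x : T) : seq nat :=
  undup [seq deg e y | y <- enum [set y | connect e x y]].

Definition degree_set_card (T : finType) (e : rel T) : nat :=
  size (undup [seq deg e y | y <- enum T]).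

(* Main.v *)
Require Import Defs.
From mathcomp Require Import all_boot all_order all_algebra zify.
Import GRing.Theory Num.Theory.

Lemma Kcoef_single (c : int) k : c != 0%R -> Kcoef (c%:P * 'X^k)%R = 1.
Proof.
move=> hc; rewrite /Kcoef polyseqMXn ?polyC_eq0 // polyseqC hc /ncons.
elim: k => [|k IH] /=; first by rewrite hc.
by rewrite IH.
Qed.

Lemma Kcoef2 (p : {poly int}) i j : (p`_i != 0)%R -> (p`_j != 0)%R -> i != j ->
  2 <= Kcoef p.
Proof.
wlog lt_ij : i j / i < j.
  move=> H hi hj nij; case: (ltngtP i j) => h.
  - exact: (H i j).
  - by apply: (H j i) => //; rewrite eq_sym.
  - by rewrite h eqxx in nij.
move=> hi hj _.
have hsj : j < size p.
  rewrite ltnNge; apply/negP => h; by rewrite nth_default in hj.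
rewrite /Kcoef -(cat_take_drop j (polyseq p)) count_cat (drop_nth 0%R) //= hj.
have : 0 < count (fun c : int => c != 0%R) (take j p).
  rewrite -has_count; apply/hasP; exists (p`_i)%R => //.
  rewrite -(nth_take 0%R lt_ij); apply: mem_nth; rewrite size_take hsj //.
set a := count _ (take _ _); set b := count _ (drop _ _); change (true + b) with (1 + b); lia.
Qed.

Lemma deg_gt0 (T : finType) (e : rel T) u v : e u v -> 0 < deg e u.
Proof. by move=> h; apply/card_gt0P; exists v; rewrite inE. Qed.

Lemma edge_sum (T : finType) (e : rel T) u v : u != v ->
  \sum_(w in [set u; v]) deg e w = deg e u + deg e v.
Proof.
by move=> huv; rewrite big_setU1 ?big_set1 //= inE.
Qed.

Lemma edgesP (T : finType) (e : rel T) E :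
  reflect (exists u v, e u v /\ E = [set u; v]) (E \in edges e).
Proof.
rewrite inE; apply: (iffP existsP) => [[u /existsP [v /andP [h /eqP ->]]]|[u [v [h ->]]]].
  by exists u, v.
by exists u; apply/existsP; exists v; rewrite h eqxx.
Qed.

Lemma coef_harm_neq0 (T : finType) (e : rel T) k E : E \in edges e ->
  (\sum_(w in E) deg e w - 1)%N = k -> ((harmonic_poly e)`_k != 0)%R.
Proof.
move=> hE hk; rewrite /harmonic_poly coef_sum.
rewrite (bigD1 E) //= coefXn -hk eqxx.
apply: lt0r_neq0; apply: ltr_pwDl => //.
by apply: sumr_ge0 => F _; rewrite coefXn ler0n.
Qed.
Lemma part1 (T : finType) (e : rel T) : is_graph e ->
     (exists x : T, (2 < size (comp_degree_set e x))%N) ->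
     2 <= Kcoef (harmonic_poly e).
Proof.
move=> [sym [irr nb]] [x Hx].
have [y exy] := nb x.
have irrN : forall u v, e u v -> u != v.
  move=> u v h; apply/eqP => huv; by rewrite huv irr in h.
have dpos : forall u, 0 < deg e u by move=> u; have [w h] := nb u; exact: deg_gt0 h.
pose s := deg e x + deg e y.
have E1 : [set x; y] \in edges e by apply/edgesP; exists x, y.
have c1 := @coef_harm_neq0 T e _ _ E1 (erefl _).
rewrite edge_sum ?irrN // in c1.
case: (boolP [exists u, exists v, e u v && (deg e u + deg e v != s)]).
  move=> /existsP [u /existsP [v /andP [euv hne]]].
  have E2 : [set u; v] \in edges e by apply/edgesP; exists u, v.
  have c2 := @coef_harm_neq0 T e _ _ E2 (erefl _).
  rewrite edge_sum ?irrN // in c2.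
  apply: (@Kcoef2 _ _ _ c1 c2).
  move: hne; rewrite /s.
  have := dpos x; have := dpos y; have := dpos u; have := dpos v.
  lia.
rewrite negb_exists => /forallP hall.
have hs : forall u v, e u v -> deg e u + deg e v = s.
  move=> u v h; move: (hall u); rewrite negb_exists => /forallP /(_ v).
  by rewrite h /= negbK => /eqP.
pose a := [pred z | (deg e z == deg e x) || (deg e z == s - deg e x)].
have cl : closed e a.
  move=> z w h; have := hs z w h; rewrite !inE /s => hzw.
  have -> : (deg e z == deg e x) = (deg e w == s - deg e x) by apply/eqP/eqP; rewrite /s; lia.
  have -> : (deg e z == s - deg e x) = (deg e w == deg e x) by apply/eqP/eqP; rewrite /s; lia.
  by rewrite orbC.
have : size (comp_degree_set e x) <= size [:: deg e x; s - deg e x].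
  apply: uniq_leq_size; first exact: undup_uniq.
  move=> d; rewrite mem_undup => /mapP [z]; rewrite mem_enum inE => cz ->.
  have := closed_connect cl cz; rewrite [x \in a]inE eqxx /= => /esym.
  rewrite inE /= => /orP [] /eqP ->; rewrite !in_cons eqxx ?orbT //.
move: Hx => /=; lia.
Qed.

Lemma card_le (m a : nat) : a < m -> #|[set j : 'I_m | j <= a]| = a.+1.
Proof.
move=> am.
have H : a.+1 <= m by [].
have -> : [set j : 'I_m | j <= a] = [set widen_ord H j | j in [set: 'I_a.+1]].
  apply/setP => j; rewrite inE; apply/idP/imsetP.
    by move=> hj; exists (Ordinal (hj : j < a.+1)) => //; apply: val_inj.
  by move=> [k _ ->] /=; rewrite -ltnS.
by rewrite card_imset ?cardsT ?card_ord //; by move=> u v /(congr1 val) /= /val_inj.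
Qed.

Lemma card_gt (m a : nat) : a < m -> #|[set j : 'I_m | ~~ (j <= a)]| = m - a.+1.
Proof.
move=> am; have := cardsC [set j : 'I_m | j <= a].
rewrite card_le // card_ord.
have -> : ~: [set j : 'I_m | j <= a] = [set j : 'I_m | ~~ (j <= a)].
  by apply/setP => j; rewrite !inE; case: (j <= a).
lia.
Qed.

Notation Tr r := ('I_r * 'I_r.+1)%type.
Definition er (r : nat) : rel (Tr r) :=
  fun p q => (val p.1 == val q.1) && ((p.2 <= p.1) != (q.2 <= q.1)).

Lemma deg_er r (p : Tr r) :
  deg (@er r) p = if p.2 <= p.1 then r - p.1 else (p.1).+1.
Proof.
case: p => a i /=; rewrite /deg.
have -> : [set q | er r (a, i) q] =
   [set (a, j) | j in [set j : 'I_r.+1 | (i <= a) != (j <= a)]].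
  apply/setP => [[b j]]; rewrite inE /er /=; apply/idP/imsetP.
    move=> /andP [/eqP /val_inj <- h]; by exists j; rewrite ?inE.
  by move=> [k]; rewrite inE => h [-> ->]; rewrite eqxx h.
rewrite card_imset; last by move=> j1 j2 [].
case: ifP => h.
  have -> : [set j : 'I_r.+1 | true != (j <= a)] = [set j : 'I_r.+1 | ~~ (j <= a)].
    by apply/setP => j; rewrite !inE; case: (j <= a).
  by rewrite card_gt // ltnS ltnW.
have -> : [set j : 'I_r.+1 | false != (j <= a)] = [set j : 'I_r.+1 | j <= a].
  by apply/setP => j; rewrite !inE; case: (j <= a).
by rewrite card_le // ltnS ltnW.
Qed.

Lemma K1 (T : finType) (e : rel T) s : irreflexive e ->
  (forall u v, e u v -> deg e u + deg e v = s) -> (exists u v, e u v) ->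
  Kcoef (harmonic_poly e) = 1.
Proof.
move=> irr hs [u0 [v0 h0]].
have irrN : forall u v, e u v -> u != v.
  move=> u v h; apply/eqP => huv; by rewrite huv irr in h.
have -> : harmonic_poly e = (((#|edges e|%:R)%R : int)%:P * 'X^(s-1))%R.
  rewrite /harmonic_poly (eq_bigr (fun _ => 'X^(s-1))%R).
    by rewrite sumr_const polyC_natr mulr_natl.
  by move=> E /edgesP [u [v [h ->]]]; rewrite edge_sum ?irrN // hs.
apply: Kcoef_single; rewrite pnatr_eq0 -lt0n; apply/card_gt0P.
by exists [set u0; v0]; apply/edgesP; exists u0, v0.
Qed.

Definition et (T : finType) (e : rel T) : rel 'I_#|T| :=
  fun u v => e (enum_val u) (enum_val v).
Arguments et {T} e.

Lemma deg_et (T : finType) (e : rel T) u : deg (et e) u = deg e (enum_val u).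
Proof.
rewrite /deg -[LHS](card_imset _ (@enum_val_inj _ _)).
apply: eq_card => w; rewrite [RHS]inE; apply/imsetP/idP.
  by move=> [v]; rewrite inE /et => h ->.
by move=> h; exists (enum_rank w); rewrite ?inE /et enum_rankK.
Qed.

Lemma part2 (r : nat) : 1 <= r ->
     exists (n : nat) (e : rel 'I_n),
       is_graph e /\ degree_set_card e = r /\ Kcoef (harmonic_poly e) = 1.
Proof.
move=> r1.
have a0 : 0 < r by [].
pose z := Ordinal a0.
have nbr : forall p : Tr r, exists q, er r p q.
  move=> [a i]; case: (boolP (i <= a)) => h.
    exists (a, ord_max); rewrite /er /= eqxx h /=.
    by rewrite -ltnNge ltn_ord.
  by exists (a, ord0); rewrite /er /= eqxx (negbTE h).
have sum : forall p q : Tr r, er r p q -> deg (er r) p + deg (er r) q = r.+1.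
  move=> [a i] [b j]; rewrite /er /= => /andP [/eqP /val_inj hab]; subst b.
  rewrite !deg_er /=; have := ltn_ord a.
  by case: (i <= a); case: (j <= a) => //= ha _; lia.
exists _, (et (er r)); split; [|split].
- split; [|split].
  + move=> u v; rewrite /et /er; by rewrite eq_sym [(_ <= _) == _]eq_sym.
  + by move=> u; rewrite /et /er !eqxx.
  + move=> u; have [q h] := nbr (enum_val u).
    by exists (enum_rank q); rewrite /et enum_rankK.
- rewrite /degree_set_card.
  set L := undup _.
  have H : L =i iota 1 r.
    move=> k; rewrite mem_undup mem_iota; apply/mapP/idP.
      move=> [y _ ->]; rewrite deg_et deg_er; have := ltn_ord (enum_val y).1.
      by case: ifP => _; move: (nat_of_ord (enum_val y).1) => t h; apply/andP; split; lia.
    move=> /andP [hk1 hk2]; have hrk : r - k < r by lia.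
    exists (enum_rank ((Ordinal hrk, ord0) : Tr r)); first by rewrite mem_enum.
    rewrite deg_et enum_rankK deg_er /= ?leq0n; lia.
  by rewrite (perm_size (uniq_perm (undup_uniq _) (iota_uniq 1 r) H)) size_iota.
- apply: (@K1 _ _ r.+1).
  + by move=> u; rewrite /et /er !eqxx.
  + by move=> u v h; rewrite !deg_et; apply: sum.
  + have [q h] := nbr (z, ord0).
    by exists (enum_rank (z, ord0)), (enum_rank q); rewrite /et !enum_rankK.
Qed.

Theorem theorem17 :
  (forall (T : finType) (e : rel T), is_graph e ->
     (exists x : T, (2 < size (comp_degree_set e x))%N) ->
     2 <= Kcoef (harmonic_poly e))
  /\
  (forall r : nat, 1 <= r ->
     exists (n : nat) (e : rel 'I_n),
       is_graph e /\ degree_set_card e = r /\ Kcoef (harmonic_poly e) = 1).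
Proof. split; [exact: part1 | exact: part2]. Qed.
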